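(* Let $f:\mathbb{R}^{n\times n}\to\mathbb{R}$ be differentiable with $\|\nabla f(X)-\nabla f(Y)\|_{\mathsf F}\le L\|X-Y\|_{\mathsf F}$ for all $X,Y\in\mathcal{D}_{[0,1]^n}$, and suppose there are constants $\underline{\nu}_f\le\overline{\nu}_f$ with $\frac{\underline{\nu}_f}{2}\|Y-X\|_{\mathsf F}^2\le f(Y)-f(X)-\langle\nabla f(X),Y-X\rangle\le\frac{\overline{\nu}_f}{2}\|Y-X\|_{\mathsf F}^2$ for all $X,Y\in\mathcal{D}_n$. Let $0<p<1$ and consider \[ \min_{X\in\mathcal{D}_n}\ F_{\sigma,p,\epsilon}(X):=f(X)+\sigma\sum_{i,j=1}^n (X_{ij}+\epsilon)^p . \] (a) Let $\epsilon>0$ and let $c>1$ be a constant. If \[ \sigma>\bar\sigma_{p,\epsilon}:=\frac{c}{p}\cdot\frac{L(2+\sqrt n)+\|\nabla f(\mathbf 0)\|_{\mathsf F}}{\epsilon^{p-1}-(1/2+\epsilon)^{p-1}}, \] then every permutation matrix is a local minimizer of this problem. (b) Let $\epsilon\ge0$. If $\sigma>\sigma^*_{p,\epsilon}:=\max\{\overline{\nu}_f/\overline{\nu}_h,0\}$ with $\overline{\nu}_h=p(1-p)(1+\epsilon)^{p-2}$, then every local minimizer of this problem is a permutation matrix.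
   Context: $\mathcal{D}_n=\{X\in\mathbb{R}^{n\times n}: X\mathbf{e}=X^{\mathsf T}\mathbf{e}=\mathbf{e},\ X\ge0\}$ is the set of doubly stochastic matrices ($\mathbf e$ the all-ones vector), $\mathcal{D}_{[0,1]^n}=\{X\in\mathbb{R}^{n\times n}:0\le X_{ij}\le1\}$, $\mathbf 0$ the zero matrix, $\langle M,N\rangle=\mathrm{tr}(M^{\mathsf T}N)$, $\|\cdot\|_{\mathsf F}$ the Frobenius norm. *)

(* Defs.v *)
From HB Require Import structures.
From mathcomp Require Import all_boot all_order all_algebra all_fingroup.
From mathcomp Require Import all_classical all_reals all_analysis.
Set Implicit Arguments. Unset Strict Implicit. Unset Printing Implicit Defensive.
Import Order.TTheory GRing.Theory Num.Theory.
Import numFieldNormedType.Exports.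
Local Open Scope ring_scope.

Section Defs.
Variable R : realType.

Definition frob_dot n (M N : 'M[R]_n) : R := \tr (M^T *m N).
Definition frob_norm n (M : 'M[R]_n) : R := Num.sqrt (frob_dot M M).

Definition grad n (f : 'M[R]_n -> R) (X : 'M[R]_n) : 'M[R]_n :=
  \matrix_(i, j) ('D_(delta_mx i j) f X).

Definition doubly_stochastic n (X : 'M[R]_n) : Prop :=
  (forall i j, 0 <= X i j) /\
  (forall i, \sum_j X i j = 1) /\ (forall j, \sum_i X i j = 1).

Definition unit_box n (X : 'M[R]_n) : Prop := forall i j, 0 <= X i j <= 1.

Definition Fobj n (f : 'M[R]_n -> R) (sigma p eps : R) (X : 'M[R]_n) : R :=
  f X + sigma * \sum_i \sum_j powR (X i j + eps) p.

Definition local_min_DS n (F : 'M[R]_n -> R) (X : 'M[R]_n) : Prop :=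
  doubly_stochastic X /\
  exists r : R, 0 < r /\
    forall Y, doubly_stochastic Y -> frob_norm (Y - X) < r -> F X <= F Y.

End Defs.

(* Main.v *)
Require Import Defs.
From HB Require Import structures.
From mathcomp Require Import all_boot all_order all_algebra all_fingroup.
From mathcomp Require Import all_classical all_reals all_analysis.
From mathcomp Require Import ring lra zify.
Import Order.TTheory GRing.Theory Num.Theory.
Import numFieldNormedType.Exports.
Local Open Scope ring_scope.


Lemma mul_self_ge0 {R : realType} (x : R) : 0 <= x * x.
Proof. by rewrite -expr2 sqr_ge0. Qed.

Lemma frob_dotE {R : realType} {n : nat} (M N : 'M[R]_n) :
  frob_dot M N = \sum_i \sum_j M i j * N i j.
Proof.
rewrite /frob_dot /mxtrace exchange_big; apply: eq_bigr => i _.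
rewrite !mxE; apply: eq_bigr => j _; by rewrite mxE.
Qed.

Lemma frob_dot_ge0 {R : realType} {n : nat} (M : 'M[R]_n) : 0 <= frob_dot M M.
Proof.
rewrite frob_dotE; apply: sumr_ge0 => i _; apply: sumr_ge0 => j _.
exact: mul_self_ge0.
Qed.

Lemma frob_norm_sq {R : realType} {n : nat} (M : 'M[R]_n) :
  frob_norm M ^+ 2 = frob_dot M M.
Proof. by rewrite /frob_norm sqr_sqrtr // frob_dot_ge0. Qed.

Lemma frob_norm_ge0 {R : realType} {n : nat} (M : 'M[R]_n) : 0 <= frob_norm M.
Proof. exact: sqrtr_ge0. Qed.

Lemma frob_dotDr {R : realType} {n : nat} (M A B : 'M[R]_n) :
  frob_dot M (A + B) = frob_dot M A + frob_dot M B.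
Proof.
rewrite !frob_dotE -big_split; apply: eq_bigr => i _.
rewrite -big_split; apply: eq_bigr => j _; by rewrite mxE mulrDr.
Qed.

Lemma frob_dotZr {R : realType} {n : nat} (M A : 'M[R]_n) a :
  frob_dot M (a *: A) = a * frob_dot M A.
Proof.
rewrite !frob_dotE mulr_sumr; apply: eq_bigr => i _.
rewrite mulr_sumr; apply: eq_bigr => j _; by rewrite mxE mulrCA.
Qed.

Lemma frob_dotDl {R : realType} {n : nat} (M A B : 'M[R]_n) :
  frob_dot (A + B) M = frob_dot A M + frob_dot B M.
Proof.
rewrite !frob_dotE -big_split; apply: eq_bigr => i _.
rewrite -big_split; apply: eq_bigr => j _; by rewrite mxE mulrDl.
Qed.

Lemma frob_dotC {R : realType} {n : nat} (A B : 'M[R]_n) :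
  frob_dot A B = frob_dot B A.
Proof.
rewrite !frob_dotE; apply: eq_bigr => i _; apply: eq_bigr => j _; exact: mulrC.
Qed.

Lemma frob_dotZl {R : realType} {n : nat} (M A : 'M[R]_n) a :
  frob_dot (a *: A) M = a * frob_dot A M.
Proof. by rewrite frob_dotC frob_dotZr frob_dotC. Qed.

Lemma frob_dot_eq0 {R : realType} {n : nat} (M : 'M[R]_n) :
  frob_dot M M = 0 -> M = 0.
Proof.
rewrite frob_dotE => H.
have H1 := psumr_eq0P (fun i _ => sumr_ge0 _ (fun j _ => mul_self_ge0 (M i j))) H.
apply/matrixP => i j; rewrite mxE.
have H2 := psumr_eq0P (fun j _ => mul_self_ge0 (M i j)) (H1 i isT).
by have /eqP := H2 j isT; rewrite mulf_eq0 orbb => /eqP.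
Qed.

Lemma frob_CS {R : realType} {n : nat} (A B : 'M[R]_n) :
  frob_dot A B <= frob_norm A * frob_norm B.
Proof.
set a := frob_norm A; set b := frob_norm B.
have a0 : 0 <= a by exact: frob_norm_ge0.
have b0 : 0 <= b by exact: frob_norm_ge0.
have key : 0 <= frob_dot (b *: A - a *: B) (b *: A - a *: B) by exact: frob_dot_ge0.
rewrite frob_dotDl !frob_dotDr !frob_dotZl !frob_dotZr in key.
rewrite -scaleN1r !frob_dotZl !frob_dotZr -!frob_norm_sq -/a -/b in key.
rewrite (frob_dotC B A) in key.
have [a0'|apos] := eqVneq a 0.
  have : frob_dot A A = 0 by rewrite -frob_norm_sq -/a a0' expr0n.
  move/frob_dot_eq0 => ->; rewrite frob_dotE big1 ?a0' ?mul0r // => i _.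
  by rewrite big1 // => j _; rewrite mxE mul0r.
have [b0'|bpos] := eqVneq b 0.
  have : frob_dot B B = 0 by rewrite -frob_norm_sq -/b b0' expr0n.
  move/frob_dot_eq0 => ->; rewrite frob_dotE big1 ?b0' ?mulr0 // => i _.
  by rewrite big1 // => j _; rewrite mxE mulr0.
have ab : 0 < a * b by rewrite mulr_gt0 // lt0r ?apos ?bpos.
have : 0 <= (a * b) * (2 * (a * b - frob_dot A B)).
  move: key; set d := frob_dot A B; move=> key; nra.
rewrite pmulr_rge0 // pmulr_rge0 // subr_ge0 //.
Qed.


Lemma bern {R : realType} (p x : R) : 0 < p < 1 -> 0 <= x ->
  powR x p <= 1 + p * (x - 1).
Proof.
move=> /andP[p0 p1] x0.
have pi0 : 0 < p^-1 by rewrite invr_gt0.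
have qi0 : 0 < (1 - p)^-1 by rewrite invr_gt0 subr_gt0.
have e : p^-1^-1 + (1 - p)^-1^-1 = 1 by rewrite !invrK addrC subrK.
have := @conjugate_powR R (powR x p) 1 p^-1 (1 - p)^-1 (powR_ge0 _ _) ler01 pi0 qi0 e.
rewrite -powRrM mulfV ?gt_eqF // powRr1 // powR1 mulr1 !invrK.
lra.
Qed.

Lemma tangent {R : realType} (p c w : R) : 0 < p < 1 -> 0 < c -> 0 <= w ->
  powR w p <= powR c p + p * powR c (p - 1) * (w - c).
Proof.
move=> pp c0 w0.
have -> : w = c * (w / c) by rewrite mulrC divfK ?gt_eqF.
have hc := ltW c0; have hwc := divr_ge0 w0 hc.
rewrite powRM //.
have := bern p (w / c) pp (divr_ge0 w0 (ltW c0)).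
move: pp => /andP[p0 p1].
rewrite -(mulr_powRB1 (ltW c0) p0) => hb.
have cp0 : 0 <= powR c (p - 1) by exact: powR_ge0.
have : c * powR c (p - 1) * powR (w / c) p <= c * powR c (p - 1) * (1 + p * (w / c - 1)).
  by rewrite ler_wpM2l // mulr_ge0 // ltW.
move=> h; apply: (le_trans h); rewrite le_eqVlt; apply/orP; left; apply/eqP.
rewrite mulrC [c * (w / c)]mulrC divfK ?gt_eqF //.
field; by rewrite gt_eqF.
Qed.

Lemma powR_anti {R : realType} (q x y : R) : q <= 0 -> 0 < x -> x <= y ->
  powR y q <= powR x q.
Proof.
move=> q0 x0 xy.
have y0 : 0 < y by exact: lt_le_trans xy.
have qq : 0 <= - q by rewrite oppr_ge0.
rewrite -(opprK q) (powRN x) (powRN y) lef_pV2 ?posrE ?powR_gt0 //.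
exact: (@ge0_ler_powR R (- q) qq x y (ltW x0) (ltW y0) xy).
Qed.

Lemma powR_santi {R : realType} (q x y : R) : q < 0 -> 0 < x -> x < y ->
  powR y q < powR x q.
Proof.
move=> q0 x0 xy.
have y0 : 0 < y by exact: lt_trans xy.
have qq : 0 < - q by rewrite oppr_gt0.
rewrite -(opprK q) (powRN x) (powRN y) ltf_pV2 ?posrE ?powR_gt0 //.
exact: (@gt0_ltr_powR R (- q) qq x y (ltW x0) (ltW y0) xy).
Qed.

Lemma is_derive_psi {R : realType} (k p y : R) : 0 < y ->
  is_derive y 1 (fun x : R => powR x p + k * (x * x)) (p * powR y (p-1) + k * (y + y)).
Proof.
move=> y0.
have h1 := is_derive1_powR p y0.
have h2 : is_derive y (1:R) (fun x : R => x) 1 by exact: is_derive_id.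
have h5 := is_deriveD h1 (is_deriveZ k (is_deriveM h2 h2)).
apply: is_derive_eq h5 _.
by rewrite /= !scaler1.
Qed.

Lemma strong_conc {R : realType} (p a h M : R) : 0 < p < 1 -> 0 < a -> 0 <= h ->
  a + 2 * h <= M ->
  powR a p + powR (a + 2 * h) p - 2 * powR (a + h) p
    <= - (p * (1 - p) * powR M (p - 2)) * h ^+ 2.
Proof.
move=> pp a0 h0 aM; have /andP[p0 p1] := pp.
have [->|hpos] := eqVneq h 0.
  by rewrite mulr0 !addr0 expr0n /= mulr0; lra.
have hp : 0 < h by rewrite lt0r hpos.
set mu := p * (1 - p) * powR M (p - 2).
have M0 : 0 < M by lra.
have mu0 : 0 <= mu by rewrite /mu !mulr_ge0 ?powR_ge0 //; lra.
set psi := fun x : R => powR x p + (mu / 2) * (x * x).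
set df := fun y : R => p * powR y (p-1) + (mu / 2) * (y + y).
have dpsi : forall y : R, 0 < y -> is_derive y 1 psi (df y).
  by move=> y y0; exact: is_derive_psi.
have cont : forall u v : R, 0 < u -> {within `[u, v], continuous psi}%classic.
  move=> u v u0; apply: derivable_within_continuous => x.
  rewrite in_itv /= => /andP[ux _].
  have := dpsi x (lt_le_trans u0 ux); by case.
have [x2 x2in E2] : exists2 c : R, c \in `]a, a + h[ & psi (a + h) - psi a = df c * (a + h - a).
  apply: MVT; first lra.
  - move=> x; rewrite in_itv /= => /andP[ax _]; apply: dpsi; lra.
  - exact: cont.
have [x1 x1in E1] : exists2 c : R, c \in `]a + h, a + 2 * h[ &
    psi (a + 2 * h) - psi (a + h) = df c * (a + 2 * h - (a + h)).
  apply: MVT; first lra.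
  - move=> x; rewrite in_itv /= => /andP[ax _]; apply: dpsi; lra.
  - apply: (cont (a + h) (a + 2 * h)); lra.
move: x2in x1in; rewrite !in_itv /= => /andP[ax2 x2h] /andP[hx1 x1h].
have x20 : 0 < x2 by lra.
have [z zin Ez] : exists2 c : R, c \in `]x2, x1[ &
    powR x1 (p - 1) - powR x2 (p - 1) = (p - 1) * powR c (p - 1 - 1) * (x1 - x2).
  apply: (@MVT R (fun y => powR y (p - 1)) (fun c => (p - 1) * powR c (p - 1 - 1))); first lra.
  - move=> x; rewrite in_itv /= => /andP[ax _]; apply: is_derive1_powR; lra.
  - apply: derivable_within_continuous => x.
    rewrite in_itv /= => /andP[ux _].
    have x0 : 0 < x by lra.
    have := @is_derive1_powR R (p - 1) x x0; by case.
move: zin; rewrite in_itv /= => /andP[xz zx].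
have zM : powR M (p - 2) <= powR z (p - 2) by apply: powR_anti; lra.
have e2 : p - 1 - 1 = p - 2 by ring.
rewrite e2 in Ez.
have dfle : df x1 - df x2 <= 0.
  rewrite /df.
  have -> : p * powR x1 (p - 1) + mu / 2 * (x1 + x1) - (p * powR x2 (p - 1) + mu / 2 * (x2 + x2))
     = (x1 - x2) * (p * (p - 1) * powR z (p - 2) + mu).
    have -> : p * powR x1 (p - 1) = p * (powR x1 (p - 1) - powR x2 (p - 1)) + p * powR x2 (p - 1) by ring.
    by rewrite Ez; field.
  rewrite pmulr_rle0; last lra.
  rewrite /mu.
  have : p * (1 - p) * powR M (p - 2) <= p * (1 - p) * powR z (p - 2).
    by rewrite ler_wpM2l // mulr_ge0 //; lra.
  lra.
have key : psi a + psi (a + 2 * h) - 2 * psi (a + h) <= 0.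
  have -> : psi a + psi (a + 2 * h) - 2 * psi (a + h) = h * (df x1 - df x2).
    have ee : a + h - a = h by ring.
    have ee' : a + 2 * h - (a + h) = h by ring.
    rewrite ee in E2; rewrite ee' in E1.
    have -> : psi a + psi (a + 2 * h) - 2 * psi (a + h)
      = (psi (a + 2 * h) - psi (a + h)) - (psi (a + h) - psi a) by ring.
    rewrite E1 E2; ring.
  by rewrite pmulr_rle0.
move: key; rewrite /psi.
have -> : powR a p + mu / 2 * (a * a) + (powR (a + 2 * h) p + mu / 2 * ((a + 2 * h) * (a + 2 * h))) -
  2 * (powR (a + h) p + mu / 2 * ((a + h) * (a + h))) =
  (powR a p + powR (a + 2 * h) p - 2 * powR (a + h) p) + mu * h ^+ 2 by rewrite /=; field.
lra.
Qed.


Lemma sum_ge1 {R : realType} {I : finType} (F : I -> R) a :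
  (forall x, 0 <= F x) -> F a <= \sum_x F x.
Proof.
move=> F0; rewrite (bigD1 a) //= lerDl; exact: sumr_ge0.
Qed.

Lemma sum_ge2 {R : realType} {I : finType} (F : I -> R) a b : a != b ->
  (forall x, 0 <= F x) -> F a + F b <= \sum_x F x.
Proof.
move=> ab F0; rewrite (bigD1 a) //= (bigD1 b) /=; last by rewrite eq_sym ab.
rewrite addrA lerDl; exact: sumr_ge0.
Qed.

Lemma ds_bounds {R : realType} {n : nat} {X : 'M[R]_n} :
  doubly_stochastic X -> forall i j, 0 <= X i j <= 1.
Proof.
move=> [X0 [Xr Xc]] i j; rewrite X0 /= -(Xr i).
exact: (sum_ge1 (fun j => X i j)).
Qed.

Lemma nonfrac {R : realType} {x : R} : 0 <= x <= 1 -> ~~ (0 < x < 1) ->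
  x = 0 \/ x = 1.
Proof.
move=> /andP[x0 x1]; rewrite negb_and -!leNgt => /orP[h|h].
  by left; apply/eqP; rewrite eq_le h x0.
by right; apply/eqP; rewrite eq_le h x1.
Qed.

Lemma frac_two {R : realType} {n : nat} (F : 'I_n -> R) (j : 'I_n) :
  (forall j, 0 <= F j <= 1) -> \sum_j F j = 1 -> 0 < F j < 1 ->
  exists j', j' != j /\ 0 < F j' < 1.
Proof.
move=> Fb Fs Fj.
have [/existsP [j' /andP [jj' Fj']]|none] := boolP [exists j', (j' != j) && (0 < F j' < 1)].
  by exists j'.
exfalso.
have F0 : forall x, 0 <= F x by move=> x; have /andP[] := Fb x.
have [/existsP [j' /andP [jj' /eqP Fj']]|none1] := boolP [exists j', (j' != j) && (F j' == 1)].
  have := sum_ge2 (fun x => F x) j' j jj' F0; rewrite Fs Fj'.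
  move: Fj => /andP[]; lra.
have : \sum_x F x = F j.
  rewrite (bigD1 j) //= big1 ?addr0 // => x xj.
  have : ~~ ((x != j) && (0 < F x < 1)) by apply/negP => h; move/negP: none; apply; apply/existsP; exists x.
  have : ~~ ((x != j) && (F x == 1)) by apply/negP => h; move/negP: none1; apply; apply/existsP; exists x.
  rewrite xj /= => /eqP h1 h2.
  by case: (nonfrac (Fb x) h2).
rewrite Fs => h; move: Fj; rewrite -h; lra.
Qed.

Lemma perm_mx_entry {R : realType} {n : nat} (s : 'S_n) i j :
  (perm_mx s : 'M[R]_n) i j = (s i == j)%:R.
Proof. by rewrite /perm_mx !mxE. Qed.

Lemma perm_of_01 {R : realType} {n : nat} (X : 'M[R]_n) :
  doubly_stochastic X -> (forall i j, ~~ (0 < X i j < 1)) -> is_perm_mx X.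
Proof.
move=> dsX nf.
have Xb := ds_bounds dsX.
move: (dsX) => [X0 [Xr Xc]].
have X01 : forall i j, X i j = 0 \/ X i j = 1 by move=> i j; exact: nonfrac.
pose f := fun i : 'I_n => odflt i [pick j | X i j == 1].
have fA : forall i, X i (f i) = 1.
  move=> i; rewrite /f; case: pickP => [j /eqP //|H] /=.
  exfalso; have : \sum_j X i j = 0.
    by rewrite big1 // => j _; case: (X01 i j) => // h; move: (H j); rewrite h eqxx.
  by rewrite Xr; lra.
have fB : forall i j, j != f i -> X i j = 0.
  move=> i j jf; case: (X01 i j) => // h.
  have := sum_ge2 (fun j => X i j) j (f i) jf (X0 i); rewrite Xr h fA; lra.
have finj : injective f.
  move=> i1 i2 e; apply/eqP; apply/negPn/negP => ne.
  have := sum_ge2 (fun i => X i (f i1)) i1 i2 ne (fun i => X0 i (f i1)).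
  by rewrite Xc /= {2}e !fA; lra.
apply/existsP; exists (perm finj); apply/eqP/matrixP => i j.
rewrite perm_mx_entry permE.
have [<-|ne] := eqVneq (f i) j; first by rewrite fA.
by rewrite fB // eq_sym.
Qed.


Lemma rank_sum_rows (F : fieldType) (m : nat) (I : finType) (P : pred I) (B : I -> 'rV[F]_m) :
  (\rank (\sum_(i | P i) <<B i>>)%MS <= #|P|)%N.
Proof.
rewrite -sum1_card.
apply: (big_ind2 (fun (M : 'M[F]_m) (r : nat) => (\rank M <= r)%N)).
- by rewrite mxrank0.
- move=> M1 r1 M2 r2 h1 h2.
  apply: leq_trans (leq_add h1 h2).
  exact: (mxrank_adds_leqif M1 M2).1.
- move=> i _; by rewrite genmxE rank_leq_row.
Qed.

Lemma exists_dir {R : realType} {n : nat} (X : 'M[R]_n) :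
  doubly_stochastic X -> ~~ is_perm_mx X ->
  exists D : 'M[R]_n, D != 0 /\ (forall i, \sum_j D i j = 0) /\
    (forall j, \sum_i D i j = 0) /\ (forall i j, D i j != 0 -> 0 < X i j < 1).
Proof.
move=> dsX np.
have Xb := ds_bounds dsX.
move: (dsX) => [X0 [Xr Xc]].
pose S := [set p : 'I_n * 'I_n | 0 < X p.1 p.2 < 1].
have [p0 p0S] : exists p0, p0 \in S.
  case: (set_0Vmem S) => [S0|[p0 p0S]]; last by exists p0.
  exfalso; move/negP: np; apply; apply: perm_of_01 => // i j.
  apply/negP => h; have : (i, j) \in S by rewrite inE.
  by rewrite S0 inE.
pose Rw := [set p.1 | p in S]; pose Cl := [set p.2 | p in S].
pose j0 := p0.2.
have j0C : j0 \in Cl by apply: imset_f.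
have cr : (2 * #|Rw| <= #|S|)%N.
  rewrite -[#|S|]sum1_card (partition_big_imset (fun p => p.1)) /=.
  rewrite mulnC -sum_nat_const; apply: leq_sum => i /imsetP [p pS ->].
  have pf : 0 < X p.1 p.2 < 1 by move: pS; rewrite inE.
  have [j' [jj' fj']] := frac_two (fun j => X p.1 j) p.2 (fun j => Xb p.1 j) (Xr p.1) pf.
  pose q := (p.1, j').
  have qS : q \in S by rewrite inE.
  have qp : q != p.
    apply/negP => /eqP e; move/negP: jj'; apply; by rewrite -e.
  rewrite (bigD1 p) ?pS ?eqxx //= (bigD1 q) /=; last by rewrite qS eqxx qp.
  by [].
have cc : (2 * #|Cl| <= #|S|)%N.
  rewrite -[#|S|]sum1_card (partition_big_imset (fun p => p.2)) /=.
  rewrite mulnC -sum_nat_const; apply: leq_sum => j /imsetP [p pS ->].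
  have pf : 0 < X p.1 p.2 < 1 by move: pS; rewrite inE.
  have [i' [ii' fi']] := frac_two (fun i => X i p.2) p.1 (fun i => Xb i p.2) (Xc p.2) pf.
  pose q := (i', p.2).
  have qS : q \in S by rewrite inE.
  have qp : q != p.
    apply/negP => /eqP e; move/negP: ii'; apply; by rewrite -e.
  rewrite (bigD1 p) ?pS ?eqxx //= (bigD1 q) /=; last by rewrite qS eqxx qp.
  by [].
have cj0 : #|Cl :\ j0| = (#|Cl| - 1)%N by rewrite (cardsD1 j0 Cl) j0C; lia.
have Cl0 : (0 < #|Cl|)%N by apply/card_gt0P; exists j0.
pose A : 'M[R]_(#|S|, n + n) :=
  \matrix_(s < #|S|) row_mx (delta_mx 0 (enum_val s).1) (delta_mx 0 (enum_val s).2).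
pose Tr := (\sum_(i in Rw) <<(row_mx (delta_mx 0 i) (delta_mx 0 j0) : 'rV[R]_(n + n))>>)%MS.
pose Tc := (\sum_(j in Cl :\ j0) <<(row_mx 0 (delta_mx 0 j - delta_mx 0 j0) : 'rV[R]_(n + n))>>)%MS.
have sub : (A <= Tr + Tc)%MS.
  apply/row_subP => s; rewrite rowK.
  have iR : (enum_val s).1 \in Rw by apply: imset_f; exact: enum_valP.
  have jC : (enum_val s).2 \in Cl by apply: imset_f; exact: enum_valP.
  set i := (enum_val s).1 in iR *; set j := (enum_val s).2 in jC *.
  have -> : row_mx (delta_mx 0 i) (delta_mx 0 j) =
    row_mx (delta_mx 0 i) (delta_mx 0 j0) + row_mx 0 (delta_mx 0 j - delta_mx 0 j0) :> 'rV[R]_(n + n).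
    by rewrite add_row_mx addr0 addrC subrK.
  apply: addmx_sub.
    apply: (submx_trans _ (addsmxSl Tr Tc)); apply: (sumsmx_sup i) => //.
    by rewrite genmxE.
  have [->|ne] := eqVneq j j0; first by rewrite subrr row_mx0 sub0mx.
  apply: (submx_trans _ (addsmxSr Tr Tc)); apply: (sumsmx_sup j).
    by rewrite !inE ne jC.
  by rewrite genmxE.
have rk : (\rank A < #|S|)%N.
  have h1 := mxrankS sub.
  have h2 := (mxrank_adds_leqif Tr Tc).1.
  have h3 : (\rank Tr <= #|Rw|)%N :=
    @rank_sum_rows _ _ _ (mem Rw) (fun i => row_mx (delta_mx 0 i) (delta_mx 0 j0) : 'rV[R]_(n + n)).
  have h4 : (\rank Tc <= #|Cl :\ j0|)%N :=
    @rank_sum_rows _ _ _ (mem (Cl :\ j0)) (fun j => row_mx 0 (delta_mx 0 j - delta_mx 0 j0) : 'rV[R]_(n + n)).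
  lia.
have kA : kermx A != 0 by rewrite kermx_eq0 /row_free neq_ltn rk.
have [u uK u0] := rowV0Pn kA.
have uA : u *m A = 0 by apply/sub_kermxP.
pose D : 'M[R]_n := \sum_(s < #|S|) u 0 s *: delta_mx (enum_val s).1 (enum_val s).2.
have DE : forall i j, D i j = \sum_(s < #|S|) u 0 s * (enum_val s == (i, j))%:R.
  move=> i j; rewrite /D summxE; apply: eq_bigr => s _; rewrite !mxE.
  by case: (enum_val s) => a b /=; rewrite xpair_eqE (eq_sym i) (eq_sym j).
have Ar : forall s i, A s (lshift n i) = ((enum_val s).1 == i)%:R.
  by move=> s i; rewrite mxE row_mxEl mxE eqxx /= eq_sym.
have Ac : forall s j, A s (rshift n j) = ((enum_val s).2 == j)%:R.
  by move=> s j; rewrite mxE row_mxEr mxE eqxx /= eq_sym.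
exists D; split.
  have [s0 us0] : exists s0, u 0 s0 != 0.
    case: (boolP [exists s, u 0 s != 0]) => [/existsP //|hn].
    exfalso; move/negP: u0; apply; apply/eqP/matrixP => a b; rewrite (ord1 a) mxE.
    by apply/eqP; move: hn; rewrite negb_exists => /forallP /(_ b); rewrite negbK.
  apply/negP => /eqP D0.
  have := DE (enum_val s0).1 (enum_val s0).2; rewrite D0 mxE.
  rewrite (bigD1 s0) //= big1 => [|s ss0].
    rewrite -surjective_pairing eqxx mulr1 addr0 => h; move/negP: us0; apply; by rewrite -h.
  by rewrite -surjective_pairing (inj_eq enum_val_inj) (negbTE ss0) mulr0.
split.
  move=> i; have := congr1 (fun M : 'M[R]_(1, n + n) => M 0 (lshift n i)) uA; rewrite /= !mxE => h.
  rewrite -[RHS]h; under eq_bigr do rewrite DE.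
  rewrite exchange_big; apply: eq_bigr => s _; rewrite Ar -mulr_sumr; congr (_ * _).
  case: (enum_val s) => a b /=.
  rewrite (bigD1 b) //= big1 => [|j jb]; first by rewrite xpair_eqE eqxx andbT addr0.
  by rewrite xpair_eqE (eq_sym b) (negbTE jb) andbF.
split.
  move=> j; have := congr1 (fun M : 'M[R]_(1, n + n) => M 0 (rshift n j)) uA; rewrite /= !mxE => h.
  rewrite -[RHS]h; under eq_bigr do rewrite DE.
  rewrite exchange_big; apply: eq_bigr => s _; rewrite Ac -mulr_sumr; congr (_ * _).
  case: (enum_val s) => a b /=.
  rewrite (bigD1 a) //= big1 => [|i ia]; first by rewrite xpair_eqE eqxx addr0.
  by rewrite xpair_eqE (eq_sym a) (negbTE ia).
move=> i j; rewrite DE => h.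
have [s es] : exists s : 'I_#|S|, enum_val s = (i, j).
  case: (boolP [exists s : 'I_#|S|, enum_val s == (i, j)]) => [/existsP [s /eqP e]|hn]; first by exists s.
  exfalso; move/negP: h; apply; apply/eqP.
  apply: big1 => s _.
  move: hn; rewrite negb_exists => /forallP /(_ s) /negbTE ->; by rewrite mulr0.
have := enum_valP s; rewrite es inE /=.
by [].
Qed.


Lemma entry_le_norm {R : realType} {n : nat} (M : 'M[R]_n) i j :
  `|M i j| <= frob_norm M.
Proof.
rewrite -(sqrtr_sqr (M i j)) /frob_norm ler_sqrt; last exact: frob_dot_ge0.
rewrite frob_dotE expr2.
apply: le_trans (sum_ge1 (fun i => \sum_j M i j * M i j) i _).
  exact: (sum_ge1 (fun j => M i j * M i j) j (fun j => mul_self_ge0 _)).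
by move=> k; apply: sumr_ge0 => l _; exact: mul_self_ge0.
Qed.

Lemma frob_normZ {R : realType} {n : nat} (M : 'M[R]_n) c :
  frob_norm (c *: M) = `|c| * frob_norm M.
Proof.
rewrite /frob_norm frob_dotZl frob_dotZr mulrA sqrtrM ?mul_self_ge0 //.
by rewrite -expr2 sqrtr_sqr.
Qed.

Lemma frob_norm_sqZ {R : realType} {n : nat} (M : 'M[R]_n) c :
  frob_norm (c *: M) ^+ 2 = c ^+ 2 * frob_dot M M.
Proof. by rewrite frob_norm_sq frob_dotZl frob_dotZr mulrA expr2. Qed.

Lemma prod_le_factor {R : realType} {I : finType} (F : I -> R) a :
  (forall i, 0 < F i <= 1) -> \prod_i F i <= F a.
Proof.
move=> Fb; rewrite (bigD1 a) //=.
have /andP[Fa0 Fa1] := Fb a.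
have hr : \prod_(i | i != a) F i <= 1.
  apply: prodr_ile1 => i _; have /andP[h1 h2] := Fb i; by rewrite ltW.
by have := ler_wpM2l (ltW Fa0) hr; rewrite mulr1.
Qed.

Lemma prod_gt0 {R : realType} {I : finType} (F : I -> R) :
  (forall i, 0 < F i) -> 0 < \prod_i F i.
Proof. by move=> Fb; apply: prodr_gt0 => i _. Qed.

Lemma pen_conc {R : realType} (p eps x s : R) : 0 < p < 1 -> 0 <= eps -> `|s| < x ->
  x + `|s| <= 1 ->
  powR (x + s + eps) p + powR (x - s + eps) p - 2 * powR (x + eps) p
    <= - (p * (1 - p) * powR (1 + eps) (p - 2)) * s ^+ 2.
Proof.
move=> pp e0 sx sx1.
have [s0|s0] := leP 0 s.
  rewrite ger0_norm // in sx sx1.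
  have h1 : 0 < x - s + eps by lra.
  have h2 : x - s + eps + 2 * s <= 1 + eps by lra.
  have := @strong_conc R p (x - s + eps) s (1 + eps) pp h1 s0 h2.
  have -> : x - s + eps + 2 * s = x + s + eps by ring.
  have -> : x - s + eps + s = x + eps by ring.
  lra.
rewrite ltr0_norm // in sx sx1.
have h1 : 0 < x + s + eps by lra.
have h0 : 0 <= - s by lra.
have h2 : x + s + eps + 2 * - s <= 1 + eps by lra.
have := @strong_conc R p (x + s + eps) (- s) (1 + eps) pp h1 h0 h2.
have -> : x + s + eps + 2 * - s = x - s + eps by ring.
have -> : x + s + eps + - s = x + eps by ring.
rewrite sqrrN; lra.
Qed.


Lemma partb {R : realType} {n : nat} (f : 'M[R]_n -> R) (nu_hi p eps sigma : R) (X : 'M[R]_n) :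
  (forall X Y : 'M[R]_n, doubly_stochastic X -> doubly_stochastic Y ->
     f Y - f X - frob_dot (grad f X) (Y - X) <= nu_hi / 2 * frob_norm (Y - X) ^+ 2) ->
  0 < p < 1 -> 0 <= eps ->
  sigma > Num.max (nu_hi / (p * (1 - p) * powR (1 + eps) (p - 2))) 0 ->
  local_min_DS (Fobj f sigma p eps) X -> is_perm_mx X.
Proof.
move=> Hf pp e0 Hs [dsX [r [r0 Hr]]].
case: (boolP (is_perm_mx X)) => // np; exfalso.
have [D [D0 [Dr [Dc Dsupp]]]] := exists_dir X dsX np.
have Xb := ds_bounds dsX.
have /andP[p0 p1] := pp.
set mu := p * (1 - p) * powR (1 + eps) (p - 2).
have mu0 : 0 < mu.
  apply: mulr_gt0; first by apply: mulr_gt0; lra.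
  by apply: powR_gt0; lra.
move: Hs; rewrite gt_max => /andP[Hs1 Hs2].
have smu : nu_hi < sigma * mu.
  have : nu_hi / mu * mu < sigma * mu by rewrite ltr_pM2r.
  by rewrite divfK ?gt_eqF.
pose h i j := if D i j == 0 then 1 else Num.min (X i j) (1 - X i j).
have hb : forall i j, 0 < h i j <= 1.
  move=> i j; rewrite /h; case: eqP => [_|/eqP nz]; first by rewrite ltr01 lexx.
  have /andP[a b] := Dsupp i j nz.
  rewrite lt_min a subr_gt0 b /= ge_min; apply/orP; left; exact: ltW.
pose th := \prod_i \prod_j h i j.
have hb' : forall i, 0 < \prod_j h i j <= 1.
  move=> i; apply/andP; split.
    by apply: prod_gt0 => j; have /andP[] := hb i j.
  by apply: prodr_ile1 => j _; have /andP[a b] := hb i j; rewrite ltW.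
have th0 : 0 < th by apply: prod_gt0 => i; have /andP[] := hb' i.
have thle : forall i j, th <= h i j.
  move=> i j; apply: le_trans (prod_le_factor (fun i => \prod_j h i j) i hb') _.
  exact: (prod_le_factor (fun j => h i j) j (hb i)).
set Mx := frob_norm D.
have Mx0 : 0 < Mx.
  rewrite lt0r frob_norm_ge0 andbT; apply/negP => /eqP M0.
  have : frob_dot D D = 0 by rewrite -frob_norm_sq -/Mx M0 expr0n.
  by move/frob_dot_eq0 => e; move/negP: D0; apply; rewrite e.
pose t := Num.min (th / (2 * Mx)) (r / (2 * Mx)).
have t0 : 0 < t by rewrite lt_min !divr_gt0 ?mulr_gt0.
have t1 : t <= th / (2 * Mx) by rewrite ge_min lexx.
have t2 : t <= r / (2 * Mx) by rewrite ge_min lexx orbT.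
have tD : forall i j, t * `|D i j| <= th / 2.
  move=> i j; have e := entry_le_norm D i j.
  apply: le_trans (_ : t * Mx <= th / 2).
    by rewrite ler_wpM2l // ltW.
  have : t * Mx <= th / (2 * Mx) * Mx by rewrite ler_wpM2r // ltW.
  by rewrite invfM mulrA divfK ?gt_eqF.
have tr : t * Mx < r.
  have : t * Mx <= r / (2 * Mx) * Mx by rewrite ler_wpM2r // ltW.
  rewrite invfM mulrA divfK ?gt_eqF //; lra.
have dsY : forall c, `|c| = t -> doubly_stochastic (X + c *: D).
  move=> c ct; split.
    move=> i j; rewrite !mxE.
    have [->|nz] := eqVneq (D i j) 0; first by rewrite mulr0 addr0; have /andP[] := Xb i j.
    have := tD i j; have := thle i j; rewrite /h (negbTE nz) le_min => /andP[a b].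
    rewrite -ct -normrM => h1.
    have h2 := @lerNnormlW _ (c * D i j) (th / 2) h1.
    lra.
  split.
    move=> i; under eq_bigr do rewrite !mxE.
    by rewrite big_split /= -mulr_sumr Dr mulr0 addr0; have [_ []] := dsX.
  move=> j; under eq_bigr do rewrite !mxE.
  by rewrite big_split /= -mulr_sumr Dc mulr0 addr0; have [_ [_]] := dsX.
have YX : forall c, X + c *: D - X = c *: D by move=> c; rewrite addrC addKr.
have Yok : forall c, `|c| = t ->
    Fobj f sigma p eps X <= Fobj f sigma p eps (X + c *: D).
  move=> c ct; apply: Hr; first exact: dsY.
  by rewrite YX frob_normZ ct.
have fb : forall c, `|c| = t ->
    f (X + c *: D) - f X - c * frob_dot (grad f X) D <= nu_hi / 2 * (t ^+ 2 * frob_dot D D).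
  move=> c ct; have := Hf X (X + c *: D) dsX (dsY c ct).
  by rewrite YX frob_dotZr frob_norm_sqZ -ct real_normK // num_real.
have pe : forall i j, powR (X i j + t * D i j + eps) p + powR (X i j - t * D i j + eps) p
    - 2 * powR (X i j + eps) p <= - mu * (t ^+ 2 * (D i j * D i j)).
  move=> i j; have [->|nz] := eqVneq (D i j) 0.
    rewrite !mulr0 addr0 subr0; lra.
  have := tD i j; have := thle i j; rewrite /h (negbTE nz) le_min => /andP[a b] h1.
  have hs : `|t * D i j| < X i j.
    rewrite normrM gtr0_norm //; lra.
  have hs1 : X i j + `|t * D i j| <= 1.
    rewrite normrM gtr0_norm //; lra.
  have := pen_conc p eps (X i j) (t * D i j) pp e0 hs hs1; rewrite -/mu.
  by rewrite exprMn expr2 [D i j ^+ 2]expr2.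
have pen : \sum_i \sum_j powR (X i j + t * D i j + eps) p
    + \sum_i \sum_j powR (X i j - t * D i j + eps) p
    - 2 * \sum_i \sum_j powR (X i j + eps) p <= - mu * (t ^+ 2 * frob_dot D D).
  rewrite frob_dotE !mulr_sumr -big_split -sumrB /=; apply: ler_sum => i _.
  rewrite !mulr_sumr -big_split -sumrB /=; apply: ler_sum => j _.
  exact: pe.
have E1 : \sum_i \sum_j powR ((X + t *: D) i j + eps) p = \sum_i \sum_j powR (X i j + t * D i j + eps) p.
  by apply: eq_bigr => i _; apply: eq_bigr => j _; rewrite !mxE.
have E2 : \sum_i \sum_j powR ((X + (- t) *: D) i j + eps) p = \sum_i \sum_j powR (X i j - t * D i j + eps) p.
  by apply: eq_bigr => i _; apply: eq_bigr => j _; rewrite !mxE mulNr.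
have ct1 : `|t| = t by rewrite gtr0_norm.
have ct2 : `|- t| = t by rewrite normrN gtr0_norm.
have F1 := Yok t ct1; have F2 := Yok (- t) ct2.
have f1 := fb t ct1; have f2 := fb (- t) ct2.
rewrite /Fobj E1 in F1; rewrite /Fobj E2 in F2.
have dD0 : 0 < frob_dot D D by rewrite -frob_norm_sq -/Mx exprn_gt0.
have K0 : 0 < t ^+ 2 * frob_dot D D by rewrite mulr_gt0 // exprn_gt0.
have sg : 0 <= sigma by exact: ltW.
have hs := ler_wpM2l sg pen.
have kk : 0 < (sigma * mu - nu_hi) * (t ^+ 2 * frob_dot D D) by rewrite mulr_gt0 // subr_gt0.
move: F1 F2 f1 f2 hs kk.
set K := t ^+ 2 * frob_dot D D.
set P1 := \sum_i \sum_j powR (X i j + t * D i j + eps) p.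
set P2 := \sum_i \sum_j powR (X i j - t * D i j + eps) p.
set P0 := \sum_i \sum_j powR (X i j + eps) p.
set g := frob_dot (grad f X) D.
move=> F1 F2 f1 f2 hs kk.
nra.
Qed.


Lemma sum_delta {R : realType} {n : nat} (a : 'I_n) (F : 'I_n -> R) :
  \sum_j (a == j)%:R * F j = F a.
Proof.
rewrite (bigD1 a) //= eqxx mul1r big1 ?addr0 // => j ja.
by rewrite eq_sym (negbTE ja) mul0r.
Qed.

Lemma perm_ds {R : realType} {n : nat} (s : 'S_n) :
  doubly_stochastic (perm_mx s : 'M[R]_n).
Proof.
split; first by move=> i j; rewrite perm_mx_entry ler0n.
split.
  move=> i; under eq_bigr do rewrite perm_mx_entry -[_%:R]mulr1.
  by rewrite sum_delta.
move=> j; under eq_bigr do rewrite perm_mx_entry.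
rewrite (bigD1 ((s^-1)%g j)) //= permKV eqxx big1 ?addr0 // => i ij.
case: eqP => // e; move/eqP: ij; case; by rewrite -e permK.
Qed.

Lemma perm_box {R : realType} {n : nat} (s : 'S_n) :
  unit_box (perm_mx s : 'M[R]_n).
Proof. move=> i j; rewrite perm_mx_entry; by case: (s i == j); rewrite ?lexx ?ler01. Qed.

Lemma zero_box {R : realType} {n : nat} : unit_box (0 : 'M[R]_n).
Proof. move=> i j; by rewrite mxE lexx ler01. Qed.

Lemma perm_norm {R : realType} {n : nat} (s : 'S_n) :
  frob_norm (perm_mx s : 'M[R]_n) = Num.sqrt n%:R.
Proof.
rewrite /frob_norm frob_dotE; congr Num.sqrt.
under eq_bigr do (under eq_bigr do rewrite perm_mx_entry); under eq_bigr do rewrite sum_delta eqxx.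
by rewrite sumr_const card_ord.
Qed.

Lemma CSneg {R : realType} {n : nat} (A B : 'M[R]_n) :
  - (frob_norm A * frob_norm B) <= frob_dot A B.
Proof.
have := frob_CS ((-1) *: A) B.
rewrite frob_dotZl frob_normZ normrN1 !mul1r mulN1r; lra.
Qed.

Lemma row_rest {R : realType} {n : nat} (Y : 'M[R]_n) i a :
  \sum_j Y i j = 1 -> \sum_(j | j != a) Y i j = 1 - Y i a.
Proof. by move=> h; move: h; rewrite (bigD1 a) //= => <-; rewrite addrC addrK. Qed.

Lemma col_rest {R : realType} {n : nat} (Y : 'M[R]_n) j a :
  \sum_i Y i j = 1 -> \sum_(i | i != a) Y i j = 1 - Y a j.
Proof. by move=> h; move: h; rewrite (bigD1 a) //= => <-; rewrite addrC addrK. Qed.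

Lemma le_rest {R : realType} {I : finType} (F : I -> R) a b : (forall x, 0 <= F x) ->
  b != a -> F b <= \sum_(j | j != a) F j.
Proof.
move=> F0 ba; rewrite (bigD1 b) //= lerDl; apply: sumr_ge0 => x _; exact: F0.
Qed.

Lemma dist_bound {R : realType} {n : nat} (s : 'S_n) (Y : 'M[R]_n) :
  doubly_stochastic Y ->
  frob_dot (Y - perm_mx s) (Y - perm_mx s) <= (\sum_i (1 - Y i (s i))) ^+ 2.
Proof.
move=> dsY; have Yb := ds_bounds dsY; move: (dsY) => [Y0 [Yr Yc]].
pose a := fun i => 1 - Y i (s i).
have a0 : forall i, 0 <= a i by move=> i; rewrite /a subr_ge0; have /andP[] := Yb i (s i).
have rowb : forall i j, j != s i -> Y i j <= a i.
  move=> i j js; rewrite /a -(row_rest Y i (s i) (Yr i)).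
  exact: (le_rest (fun j => Y i j) (s i) j (Y0 i) js).
have colb : forall i j, j != s i -> Y i j <= a ((s^-1)%g j).
  move=> i j js; set k := (s^-1)%g j.
  have sk : s k = j by rewrite /k permKV.
  have ik : i != k by apply/negP => /eqP e; move/negP: js; apply; rewrite e sk.
  rewrite /a sk -(col_rest Y j k (Yc j)).
  exact: (le_rest (fun i => Y i j) k i (fun x => Y0 x j) ik).
rewrite frob_dotE.
apply: (@le_trans _ _ (\sum_i \sum_j a i * a ((s^-1)%g j))).
  apply: ler_sum => i _; apply: ler_sum => j _.
  rewrite !mxE.
  have [<-|ne] := eqVneq (s i) j.
    rewrite permK /a -[(1 - _) * _]mulrNN !opprB; exact: lexx.
  rewrite ?(negbTE ne) /= subr0; apply: ler_pM; [exact: Y0|exact: Y0|apply: rowb|apply: colb];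
    by rewrite eq_sym.
have -> : \sum_i \sum_j a i * a ((s^-1)%g j) = \sum_i a i * \sum_j a j.
  apply: eq_bigr => i _; rewrite -mulr_sumr; congr (_ * _).
  rewrite (reindex_inj (@perm_inj _ s)) /=; apply: eq_bigr => j _; by rewrite permK.
by rewrite -mulr_suml expr2.
Qed.

Lemma pen_bound {R : realType} {n : nat} (s : 'S_n) (Y : 'M[R]_n) (p eps rho : R) :
  0 < p < 1 -> 0 < eps -> 0 < rho -> rho <= 2^-1 -> doubly_stochastic Y ->
  (forall i j, `|(Y - perm_mx s) i j| < rho) ->
  (p * powR (rho + eps) (p - 1) - p * powR (2^-1 + eps) (p - 1)) * \sum_i (1 - Y i (s i))
  <= \sum_i \sum_j powR (Y i j + eps) p - \sum_i \sum_j powR ((perm_mx s : 'M[R]_n) i j + eps) p.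
Proof.
move=> pp e0 r0 rh dsY Dlt.
have Yb := ds_bounds dsY; move: (dsY) => [Y0 [Yr Yc]].
have /andP[p0 p1] := pp.
rewrite mulr_sumr -sumrB; apply: ler_sum => i _.
rewrite -sumrB (bigD1 (s i)) //=.
rewrite perm_mx_entry eqxx.
have -> : \sum_(j | j != s i) (powR (Y i j + eps) p - powR ((perm_mx s : 'M[R]_n) i j + eps) p)
    = \sum_(j | j != s i) (powR (Y i j + eps) p - powR eps p).
  apply: eq_bigr => j js; rewrite perm_mx_entry eq_sym (negbTE js) add0r //.
set g := p * powR (rho + eps) (p - 1).
set b := p * powR (2^-1 + eps) (p - 1).
have B2 : g * (1 - Y i (s i)) <= \sum_(j | j != s i) (powR (Y i j + eps) p - powR eps p).
  rewrite -(row_rest Y i (s i) (Yr i)) mulr_sumr; apply: ler_sum => j js.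
  have hY := Dlt i j; rewrite !mxE eq_sym (negbTE js) subr0 in hY.
  have y0 := Y0 i j.
  rewrite ger0_norm // in hY.
  have ye : 0 < Y i j + eps by lra.
  have ht := tangent p (Y i j + eps) eps pp ye (ltW e0).
  have hq : p - 1 <= 0 by lra.
  have hle : Y i j + eps <= rho + eps by lra.
  have ha := powR_anti (p - 1) (Y i j + eps) (rho + eps) hq ye hle.
  have : p * powR (rho + eps) (p - 1) * Y i j <= p * powR (Y i j + eps) (p - 1) * Y i j.
    by rewrite ler_wpM2r // ler_wpM2l // ltW.
  rewrite /g; lra.
have B1 : - b * (1 - Y i (s i)) <= powR (Y i (s i) + eps) p - powR (1 + eps) p.
  have hY := Dlt i (s i); rewrite !mxE eqxx /= in hY.
  have /andP[y0 y1] := Yb i (s i).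
  rewrite ler0_norm ?subr_le0 // in hY.
  have ye : 0 < Y i (s i) + eps by lra.
  have e1 : 0 <= 1 + eps by lra.
  have ht := tangent p (Y i (s i) + eps) (1 + eps) pp ye e1.
  have h2 : 0 < 2^-1 + eps by lra.
  have hq : p - 1 <= 0 by lra.
  have hle : 2^-1 + eps <= Y i (s i) + eps by lra.
  have ha := powR_anti (p - 1) (2^-1 + eps) (Y i (s i) + eps) hq h2 hle.
  have : p * powR (Y i (s i) + eps) (p - 1) * (1 - Y i (s i)) <= b * (1 - Y i (s i)).
    by rewrite ler_wpM2r ?subr_ge0 // /b ler_wpM2l // ltW.
  have e2 : 1 + eps - (Y i (s i) + eps) = 1 - Y i (s i) by ring.
  rewrite e2 in ht.
  lra.
lra.
Qed.


Lemma parta {R : realType} {n : nat} (f : 'M[R]_n -> R) (L nu_lo p eps c sigma : R) (s : 'S_n) :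
  (forall X Y : 'M[R]_n, unit_box X -> unit_box Y ->
     frob_norm (grad f X - grad f Y) <= L * frob_norm (X - Y)) ->
  (forall X Y : 'M[R]_n, doubly_stochastic X -> doubly_stochastic Y ->
     nu_lo / 2 * frob_norm (Y - X) ^+ 2 <= f Y - f X - frob_dot (grad f X) (Y - X)) ->
  0 < p < 1 -> 0 < eps -> 1 < c ->
  sigma > c / p * ((L * (2 + Num.sqrt n%:R) + frob_norm (grad f 0))
                      / (powR eps (p - 1) - powR (2^-1 + eps) (p - 1))) ->
  local_min_DS (Fobj f sigma p eps) (perm_mx s).
Proof.
move=> Hlip Hlo pp e0 c1 Hs.
have /andP[p0 p1] := pp.
set P := perm_mx s.
have dsP : doubly_stochastic P := perm_ds s.
split => //.
case: (posnP n) => [n0|npos].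
  exists 1; split => // Y _ _.
  have -> : Y = P by apply/matrixP => -[i hi]; exfalso; move: hi; rewrite n0.
  exact: lexx.
set G0 := frob_norm (grad f 0).
have G00 : 0 <= G0 by exact: frob_norm_ge0.
have hL : frob_norm (grad f P - grad f 0) <= L * Num.sqrt n%:R.
  by have := Hlip P 0 (perm_box s) zero_box; rewrite subr0 perm_norm.
have sqn : 0 < Num.sqrt (n%:R : R) by rewrite sqrtr_gt0 ltr0n.
have L0 : 0 <= L.
  have := le_trans (frob_norm_ge0 _) hL; by rewrite pmulr_lge0.
set sq := Num.sqrt (n%:R : R).
set K' := L * sq + G0.
set K := L * (2 + sq) + G0.
have KK : K' <= K by rewrite /K' /K lerD2r mulrDr lerDr mulr_ge0.
have K'0 : 0 <= K' by rewrite /K' addr_ge0 // mulr_ge0 // ltW.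
set E := powR eps (p - 1).
set Eh := powR (2^-1 + eps) (p - 1).
have Del0 : 0 < E - Eh.
  rewrite subr_gt0; apply: powR_santi => //; lra.
have hsig : c * K < sigma * (p * (E - Eh)).
  have pD : 0 < p * (E - Eh) by rewrite mulr_gt0.
  have := Hs; rewrite -(ltr_pM2r pD) => h; apply: le_lt_trans h.
  rewrite le_eqVlt; apply/orP; left; apply/eqP.
  rewrite /K /E /Eh /sq /G0; field.
  by rewrite -/E -/Eh (gt_eqF Del0) (gt_eqF p0).
have K0 : 0 <= K by lra.
have cK : K <= c * K.
  have : 0 <= (c - 1) * K by rewrite mulr_ge0 //; lra.
  lra.
have sig0 : 0 < sigma.
  have : 0 <= c / p * (K / (E - Eh)).
    by rewrite !mulr_ge0 ?invr_ge0 ?(ltW Del0) //; lra.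
  move=> h; exact: le_lt_trans h Hs.
set eta := sigma * (p * (E - Eh)) - K'.
have eta0 : 0 < eta by rewrite /eta; lra.
set m := Num.min nu_lo 0.
have m0 : m <= 0 by rewrite /m ge_min lexx orbT.
have mn : m <= nu_lo by rewrite /m ge_min lexx.
set Q := E / eps.
have E0 : 0 < E by exact: powR_gt0.
have Q0 : 0 <= Q by rewrite /Q divr_ge0 // ltW.
have epsQ : eps * Q = E by rewrite /Q mulrC divfK ?gt_eqF.
set Cst := sigma * p * Q - m * n%:R / 2.
have Cst0 : 0 <= Cst.
  have : 0 <= sigma * p * Q by apply: mulr_ge0 => //; apply: mulr_ge0; apply: ltW.
  have : m * n%:R <= 0 by rewrite mulr_le0_ge0.
  rewrite /Cst; lra.
set rho := Num.min (2^-1) (eta / (2 * (Cst + 1))).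
have rho0 : 0 < rho by rewrite lt_min invr_gt0 ltr0Sn /= divr_gt0 // mulr_gt0 //; lra.
have rhoh : rho <= 2^-1 by rewrite ge_min lexx.
have rhoC : rho * Cst <= eta / 2.
  have h1 : rho <= eta / (2 * (Cst + 1)) by rewrite ge_min lexx orbT.
  have h2 : rho * (Cst + 1) <= eta / (2 * (Cst + 1)) * (Cst + 1).
    by rewrite ler_wpM2r //; lra.
  rewrite invfM mulrA divfK in h2; last by rewrite gt_eqF //; lra.
  nra.
exists rho; split => // Y dsY nY.
set D := Y - P.
have Dlt : forall i j, `|D i j| < rho by move=> i j; exact: le_lt_trans (entry_le_norm D i j) nY.
set delta := \sum_i (1 - Y i (s i)).
have Yb := ds_bounds dsY.
have delta0 : 0 <= delta.
  by apply: sumr_ge0 => i _; rewrite subr_ge0; have /andP[] := Yb i (s i).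
have deln : delta <= n%:R * rho.
  have -> : n%:R * rho = \sum_(i < n) rho by rewrite sumr_const card_ord mulr_natl.
  apply: ler_sum => i _.
  have := Dlt i (s i); rewrite !mxE eqxx /=.
  have /andP[y0 y1] := Yb i (s i).
  rewrite ler0_norm ?subr_le0 //; lra.
have dD := dist_bound s Y dsY; rewrite -/P -/D -/delta in dD.
have dD0 : 0 <= frob_dot D D by exact: frob_dot_ge0.
have nD : frob_norm D <= delta.
  by rewrite /frob_norm -(ger0_norm delta0) -sqrtr_sqr ler_sqrt // sqr_ge0.
have pen := pen_bound s Y p eps rho pp e0 rho0 rhoh dsY Dlt.
rewrite -/P -/delta -/Eh in pen.
have fl := Hlo P Y dsP dsY; rewrite -/D frob_norm_sq in fl.
have gD : - (K' * delta) <= frob_dot (grad f P) D.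
  have -> : grad f P = (grad f P - grad f 0) + grad f 0 by rewrite subrK.
  rewrite frob_dotDl.
  have c1' := CSneg (grad f P - grad f 0) D.
  have c2' := CSneg (grad f 0) D.
  have nD0 : 0 <= frob_norm D by exact: frob_norm_ge0.
  have a1 : frob_norm (grad f P - grad f 0) * frob_norm D <= L * sq * delta.
    apply: ler_pM; [exact: frob_norm_ge0|exact: nD0|exact: hL|exact: nD].
  have a2 : G0 * frob_norm D <= G0 * delta by rewrite ler_wpM2l.
  rewrite /K' -/G0 in c2' *; lra.
have quad : m / 2 * (n%:R * rho) * delta <= nu_lo / 2 * frob_dot D D.
  have q1 : 0 <= (nu_lo - m) * frob_dot D D by rewrite mulr_ge0 // subr_ge0.
  have q2 : 0 <= - m * (delta ^+ 2 - frob_dot D D) by rewrite mulr_ge0 // ?subr_ge0 // oppr_ge0.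
  have q3 : 0 <= - m * delta * (n%:R * rho - delta).
    by rewrite mulr_ge0 // ?mulr_ge0 ?subr_ge0 // oppr_ge0.
  nra.
set Erho := powR (rho + eps) (p - 1).
have Erb : E - rho * Q <= Erho.
  have re : 0 < rho + eps by lra.
  have h1 : (rho + eps) * Erho = powR (rho + eps) p by rewrite mulr_powRB1 // ltW.
  have h2 : eps * E = powR eps p by rewrite mulr_powRB1 // ltW.
  have h3 : powR eps p <= powR (rho + eps) p.
    apply: (@ge0_ler_powR R p (ltW p0) eps (rho + eps)); rewrite ?nnegrE; lra.
  have h4 : Erho <= E by apply: powR_anti; lra.
  have h5 : 0 <= eps * (Erho - E + rho * Q).
    rewrite mulrDr mulrBr (mulrCA eps rho Q) epsQ; nra.
  by move: h5; rewrite pmulr_rge0 //; lra.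
rewrite /Fobj.
set PY := \sum_i \sum_j powR (Y i j + eps) p.
set PP := \sum_i \sum_j powR (P i j + eps) p.
rewrite -/PY -/PP in pen.
have s1 : sigma * ((p * Erho - p * Eh) * delta) <= sigma * (PY - PP).
  by rewrite ler_wpM2l // ltW.
have s2 : sigma * p * delta * (E - rho * Q) <= sigma * p * delta * Erho.
  by rewrite ler_wpM2l // !mulr_ge0 // ltW.
have s3 : 0 <= delta * (eta - rho * Cst) by rewrite mulr_ge0 //; lra.
move: s1 s2 s3 fl gD quad; rewrite /eta /Cst.
nra.
Qed.

Theorem theorem3p5 (R : realType) (n : nat) (f : 'M[R]_n -> R)
  (L nu_lo nu_hi p : R) :
  (forall X : 'M[R]_n, differentiable f X) ->
  (forall X Y : 'M[R]_n, unit_box X -> unit_box Y ->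
     frob_norm (grad f X - grad f Y) <= L * frob_norm (X - Y)) ->
  nu_lo <= nu_hi ->
  (forall X Y : 'M[R]_n, doubly_stochastic X -> doubly_stochastic Y ->
     nu_lo / 2 * frob_norm (Y - X) ^+ 2
       <= f Y - f X - frob_dot (grad f X) (Y - X) /\
     f Y - f X - frob_dot (grad f X) (Y - X)
       <= nu_hi / 2 * frob_norm (Y - X) ^+ 2) ->
  0 < p < 1 ->
  (* (a) *)
  (forall eps c sigma : R, 0 < eps -> 1 < c ->
     sigma > c / p * ((L * (2 + Num.sqrt n%:R) + frob_norm (grad f 0))
                      / (powR eps (p - 1) - powR (2^-1 + eps) (p - 1))) ->
     forall s : 'S_n, local_min_DS (Fobj f sigma p eps) (perm_mx s)) /\
  (* (b) *)
  (forall eps sigma : R, 0 <= eps ->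
     sigma > Num.max (nu_hi / (p * (1 - p) * powR (1 + eps) (p - 2))) 0 ->
     forall X : 'M[R]_n, local_min_DS (Fobj f sigma p eps) X ->
       is_perm_mx X).
Proof.
move=> _ Hlip hnu Hf pp; split.
  move=> eps c sigma e0 c1 Hs s.
  apply: (parta f L nu_lo p eps c sigma s Hlip _ pp e0 c1 Hs).
  move=> X Y dX dY; by have [] := Hf X Y dX dY.
move=> eps sigma e0 Hs X Hx.
apply: (partb f nu_hi p eps sigma X _ pp e0 Hs Hx).
move=> X0 Y dX dY; by have [] := Hf X0 Y dX dY.
Qed.
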